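(* Let $\mathcal G$ be a connected rank-3 tensor Feynman graph with the data described in the context. Then \[ F_{\rm int}(\mathcal G)=-\big(\omega(\mathcal G_{\rm col})-g_{\partial\mathcal G}\big)+3V_++2V_m-N_{\rm ext}-(C_\partial-1)+2 . \]
   Context: Bubbles. Use colors $1,2,3$ for bubble edges and color $0$ for propagator lines. The tetrahedral bubble $\mathbf b_+$ is $K_4$ on $w_1,\dots,w_4$ with the following colored edges: \begin{itemize} \item $w_1w_2$ and $w_3w_4$ of color 1; \item $w_1w_3$ and $w_2w_4$ of color 2; \item $w_1w_4$ and $w_2w_3$ of color 3. \end{itemize} For $c\in\{1,2,3\}$, the melonic bubble $\mathbf b_c$ has vertices $w_1,\dots,w_4$ and the following edges: \begin{itemize} \item $w_1w_2$ doubled, carrying the two colors of $\{1,2,3\}\setminus\{c\}$; \item $w_3w_4$ doubled, carrying the two colors of $\{1,2,3\}\setminus\{c\}$; \item single edges $w_2w_3$ and $w_4w_1$ of color $c$. \end{itemize} Graphs. A graph $\mathcal G$ consists of the following data: \begin{itemize} \item $V=V_++V_m$ interaction vertices, each a copy of $\mathbf b_+$ ($V_+$ of them) or of some $\mathbf b_c$ ($V_m$ of them); \item $L$ internal lines of color 0, each joining two of the $4V$ bubble vertices, with each bubble vertex incident to at most one line; \item a color-0 external leg attached to each bubble vertex not incident to a line. \end{itemize} Let $N_{\rm ext}$ be the number of external legs, so $4V=2L+N_{\rm ext}$. The colored extension $\mathcal G_{\rm col}$ is the resulting 4-edge-colored graph, with $4V$ vertices, $L+6V$ edges and $N_{\rm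 ext}$ half-edges. Connected means $\mathcal G_{\rm col}$ is connected. Faces. For $c\in\{1,2,3\}$, a face of color $c$ is a connected component of the subgraph of $\mathcal G_{\rm col}$ formed by the color-0 edges and half-edges and the color-$c$ edges. It is internal if it is a cycle, and external if it is a path joining two external legs. $F_{\rm int}(\mathcal G)$ is the total number of internal faces. Boundary graph. The boundary graph $\partial\mathcal G$ is defined as follows: \begin{itemize} \item its vertices are the external legs; \item each external face of color $c$ gives an edge of color $c$ joining its two end legs. \end{itemize} $C_\partial$ is its number of connected components. $F_\partial$ is its number of bicolored cycles (cycles using exactly the edges of two colors $\{a,b\}\subset\{1,2,3\}$). Its genus $g_{\partial\mathcal G}$ is defined by \[ 2C_\partial-2g_{\partial\mathcal G}=N_{\rm ext}-\tfrac32N_{\rm ext}+F_\partial . \] Pinched jackets. The three jackets correspond to the three cyclic orders $(0,a,b,c)$ of the colors $0,1,2,3$ up to reversal; equivalently, to the choice of the unordered pair $\{a,c\}\subset\{1,2,3\}$ of colors adjacent to $0$. For such a jacket $J$, let $F_{\tilde J}$ be the sum of: \begin{itemize} \item the number of cycles of $\mathcal G_{\rm col}$ bicolored in one of the pairs $\{0,a\},\{a,b\},\{b,c\},\{c,0\}$; \item the number of bicolored cycles of $\partial\mathcal G$ with colors $\{a,c\}$. \end{itemize} The genus of the pinched jacket $\tilde J$ is defined by \[ 2-2g_{\tilde J}=4V-(L+6V)+F_{\tilde J}. \] Finally, $\omega(\mathcal G_{\rm col})=\sum_{J}g_{\tilde J}$ is the sum over the three pinched jackets. *)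

(* Defs.v *)
From mathcomp Require Import all_boot all_order all_algebra.
Set Implicit Arguments. Unset Strict Implicit. Unset Printing Implicit Defensive.
Import Order.TTheory GRing.Theory Num.Theory.

(* Conventions:
   - bubble colors 1,2,3 are represented by c : 'I_3 (c = color c+1);
   - bubble vertices w1..w4 are represented by k : 'I_4 (k = w_(k+1));
   - the type of a bubble is  None  (tetrahedral b_+) or  Some c  (melonic b_(c+1));
   - bubble vertices of the graph are pairs (i, k) : 'I_V * 'I_4 (vertex w_(k+1)
     of the i-th interaction bubble);
   - the color-0 lines are encoded by an involution m : the vertex x is joined
     by a line to m x when m x != x, and carries an external leg when m x = x. *)

Definition bvert (V : nat) := ('I_V * 'I_4)%type.

(* colored edges of a bubble, listed as in the paper (one orientation each) *)
Definition bubble_edges (b : option 'I_3) (c : 'I_3) : seq (nat * nat) :=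
  match b with
  | None =>
      match val c with
      | 0 => [:: (0, 1); (2, 3)]
      | 1 => [:: (0, 2); (1, 3)]
      | _ => [:: (0, 3); (1, 2)]
      end
  | Some c' =>
      if c == c' then [:: (1, 2); (3, 0)]
      else [:: (0, 1); (2, 3)]             (* other colors: w1w2, w3w4 (doubled) *)
  end.

Definition bubble_edge (b : option 'I_3) (c : 'I_3) (k l : 'I_4) : bool :=
  ((val k, val l) \in bubble_edges b c) || ((val l, val k) \in bubble_edges b c).

Section Graph.
Variables (V : nat) (kind : 'I_V -> option 'I_3) (m : bvert V -> bvert V).

Definition gedge (c : 'I_3) : rel (bvert V) :=
  fun x y => (x.1 == y.1) && bubble_edge (kind x.1) c x.2 y.2.

Definition line : rel (bvert V) := fun x y => (m x == y) && (x != y).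

Definition legs : {set bvert V} := [set x | m x == x].

Definition V_plus : nat := #|[set i : 'I_V | kind i == None]|.
Definition V_melo : nat := #|[set i : 'I_V | kind i != None]|.
Definition N_ext : nat := #|legs|.
Definition L_lines : nat := #|[set [set x; m x] | x in [set x : bvert V | m x != x]]|.

Definition col_rel : rel (bvert V) := fun x y => line x y || [exists c, gedge c x y].
Definition connected_graph : Prop := forall x y : bvert V, connect col_rel x y.

Definition ncomp (S : {set bvert V}) (r : rel (bvert V)) : nat :=
  #|[set [set y | connect r x y] | x in S]|.

Definition face_rel (c : 'I_3) : rel (bvert V) := fun x y => gedge c x y || line x y.
Definition faces (c : 'I_3) : {set {set bvert V}} :=
  [set [set y | connect (face_rel c) x y] | x : bvert V].
Definition int_faces (c : 'I_3) : {set {set bvert V}} :=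
  [set F in faces c | [forall y in F, m y != y]].
Definition F_int : nat := \sum_(c < 3) #|int_faces c|.

Definition bub_cycles (a b : 'I_3) : nat :=
  ncomp [set: bvert V] (fun x y => gedge a x y || gedge b x y).

(* boundary graph: an edge of color c joins the two (distinct) legs of an
   external face of color c *)
Definition bedge (c : 'I_3) : rel (bvert V) :=
  fun x y => [&& m x == x, m y == y, x != y & connect (face_rel c) x y].

Definition C_bnd : nat := ncomp legs (fun x y => [exists d, bedge d x y]).
Definition bnd_cycles_without (b : 'I_3) : nat :=
  ncomp legs (fun x y => [exists d, (d != b) && bedge d x y]).
Definition F_bnd : nat := \sum_(b < 3) bnd_cycles_without b.

Local Open Scope ring_scope.

(* 2 C - 2 g = N - 3/2 N + F *)
Definition g_bnd : rat :=
  (2 * (C_bnd%:R) - ((N_ext%:R) - 3%:R / 2%:R * (N_ext%:R) + (F_bnd%:R))) / 2%:R.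

(* pinched jacket whose middle color (not adjacent to 0) is b; the colors
   adjacent to 0 are the two colors a,c different from b *)
Definition F_jacket (b : 'I_3) : nat :=
  (\sum_(a < 3 | a != b) (#|int_faces a| + bub_cycles a b))%N + bnd_cycles_without b.

(* 2 - 2 g = 4V - (L + 6V) + F *)
Definition g_jacket (b : 'I_3) : rat :=
  (2%:R - ((4 * V)%:R - (L_lines + 6 * V)%:R + (F_jacket b)%:R)) / 2%:R.

Definition omega : rat := \sum_(b < 3) g_jacket b.

End Graph.

(* Main.v *)
Require Import Defs.
From mathcomp Require Import all_boot all_order all_algebra.
From mathcomp Require Import lra zify.
Import GRing.Theory Num.Theory.

Definition rb (o : option 'I_3) (a b : 'I_3) : rel 'I_4 :=
  fun k l => bubble_edge o a k l || bubble_edge o b k l.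
Definition Q o a b (k : 'I_4) : bool :=
  all (fun l => connect (rb o a b) k l ==> (k <= l)%N) (enum 'I_4).
Definition cnt o a b := count (Q o a b) (enum 'I_4).

Lemma enum4 : Finite.enum 'I_4 = [:: ord0; lift ord0 ord0; lift ord0 (lift ord0 ord0);
   lift ord0 (lift ord0 (lift ord0 ord0))].
Proof. by rewrite -enumT !enum_ordSl enum_ord0. Qed.

Definition h o := (\sum_(b < 3) \sum_(a < 3 | a != b) cnt o a b)%N.
Ltac crunch := rewrite /h !big_ord_recl !big_ord0;
  do 3 (rewrite big_mkcond /= !big_ord_recl big_ord0 /=);
  rewrite /cnt /Q /connect /rgraph /enum_mem !card_ord !enum4; vm_compute; reflexivity.
Lemma hN : h None = 6%N. Proof. crunch. Qed.
Lemma hS c : h (Some c) = 8%N. Proof. case: c => [[|[|[|]]] ?] //; crunch. Qed.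

Lemma QP o a b k : Q o a b k = [forall l, connect (rb o a b) k l ==> (k <= l)%N].
Proof.
apply/allP/forallP => H l; first exact: H (mem_enum _ l).
by move=> _; exact: H.
Qed.

Lemma gedge_sym V (kind : 'I_V -> option 'I_3) c : symmetric (gedge kind c).
Proof. move=> x y; rewrite /gedge /bubble_edge eq_sym; case: eqP => [->|] //=; exact: orbC. Qed.

Lemma conn_bub V (kind : 'I_V -> option 'I_3) a b (x y : bvert V) :
  connect (fun x y => gedge kind a x y || gedge kind b x y) x y =
  (x.1 == y.1) && connect (rb (kind x.1) a b) x.2 y.2.
Proof.
apply/idP/idP.
- case/connectP=> p; elim: p x => [|z p IH] x /=; first by move=> _ ->; rewrite eqxx connect0.
  case/andP=> xz pz ey; have /andP[/eqP e1 e2] := IH z pz ey.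
  have [exz rxz] : x.1 = z.1 /\ rb (kind x.1) a b x.2 z.2.
    by move: xz; rewrite /gedge /rb; case/orP=> /andP[/eqP e be]; split=> //; rewrite be ?orbT.
  rewrite exz e1 in rxz *; rewrite e1 in e2; rewrite eqxx /=.
  exact: connect_trans (connect1 rxz) e2.
- case/andP=> /eqP; case: x y => [i k] [j l] /= <-.
  case/connectP=> p; elim: p k => [|z p IH] k /=; first by move=> _ ->; exact: connect0.
  case/andP=> kz pz el; apply: connect_trans (connect1 _) (IH z pz el).
  by rewrite /gedge /= eqxx /=.
Qed.

Lemma bub_count V (kind : 'I_V -> option 'I_3) a b :
  bub_cycles kind a b = (\sum_(i < V) cnt (kind i) a b)%N.
Proof.
rewrite /bub_cycles /ncomp.
set r := (fun x y : bvert V => gedge kind a x y || gedge kind b x y).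
have sr : connect_sym r.
  by apply: sym_connect_sym => x y; rewrite /r (gedge_sym _ _ a) (gedge_sym _ _ b).
set cl := fun x : bvert V => [set y | connect r x y].
set S := [set x : bvert V | Q (kind x.1) a b x.2].
have Qi x y : x \in S -> connect r x y -> x.1 = y.1 /\ (x.2 <= y.2)%N.
  rewrite inE QP => /forallP Hx; rewrite conn_bub => /andP[/eqP e c]; split=> //.
  exact: (implyP (Hx _) c).
have E : [set cl x | x in [set: bvert V]] = cl @: S.
  apply/setP => B; apply/imsetP/imsetP => [[x _ ->]|[x _ ->]]; last by exists x.
  have [l0 c0 min0] : exists2 l0, connect (rb (kind x.1) a b) x.2 l0 &
      forall l, connect (rb (kind x.1) a b) x.2 l -> (l0 <= l)%N.
    by case: (arg_minnP (fun l : 'I_4 => nat_of_ord l) (connect0 (rb (kind x.1) a b) x.2))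
      => l0 c0 min0; exists l0.
  have cxy : connect r x (x.1, l0) by rewrite conn_bub /= eqxx.
  exists (x.1, l0).
    rewrite inE QP /=; apply/forallP => l; apply/implyP => cl0; apply: min0.
    exact: connect_trans c0 cl0.
  by apply/setP => z; rewrite !inE (same_connect sr cxy z).
have inj : {in S &, injective cl}.
  move=> x y xS yS exy.
  have : y \in cl y by rewrite inE connect0.
  rewrite -exy inE => cxy.
  have cyx : connect r y x by rewrite sr.
  have [e1 l1] := Qi _ _ xS cxy; have [e2 l2] := Qi _ _ yS cyx.
  move: e1 l1 l2; case: x {xS cxy cyx exy e2} => i k; case: y {yS} => j l /= -> l1 l2.
  by congr pair; apply: val_inj; apply/eqP; rewrite eqn_leq l1 l2.
rewrite E card_in_imset //.
rewrite /S -sum1_card big_mkcond /=.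
under eq_bigr => x _ do rewrite inE.
rewrite -(pair_bigA _ (fun i k => if Q (kind i) a b k then 1 else 0)%N).
apply: eq_bigr => i _; rewrite -big_mkcond sum1_count /cnt enumT.
by [].
Qed.

Lemma B_count V (kind : 'I_V -> option 'I_3) :
  (\sum_(b < 3) \sum_(a < 3 | a != b) bub_cycles kind a b =
   6 * V_plus kind + 8 * V_melo kind)%N.
Proof.
under eq_bigr => b _ do under eq_bigr => a _ do rewrite bub_count.
under eq_bigr => b _ do rewrite exchange_big.
rewrite exchange_big /=.
rewrite (bigID (fun i => kind i == None)) /=.
rewrite (eq_bigr (fun _ => 6%N)); last by move=> i /eqP ki; rewrite -hN -ki.
rewrite [X in (_ + X)%N](eq_bigr (fun _ => 8%N)); last first.
  by move=> i; case: (kind i) => [c|] // _; rewrite -(hS c).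
rewrite !sum_nat_const /V_plus /V_melo !cardsE mulnC [(8 * _)%N]mulnC.
by [].
Qed.

Lemma V_split V (kind : 'I_V -> option 'I_3) : (V_plus kind + V_melo kind = V)%N.
Proof.
rewrite /V_plus /V_melo; transitivity #|'I_V|; last exact: card_ord.
rewrite -(cardsC [set i | kind i == None]).
by congr addn; apply: eq_card => i; rewrite !inE.
Qed.

Lemma lines V (m : bvert V -> bvert V) : involutive m ->
  (2 * L_lines m + N_ext m = 4 * V)%N.
Proof.
move=> minv.
set NF := [set x : bvert V | m x != x].
set P := [set [set x; m x] | x in NF].
have key x z : z \in [set x; m x] -> [set x; m x] = [set z; m z].
  by rewrite !inE => /orP[/eqP->|/eqP->] //; rewrite minv setUC.
have triv : trivIset P.
  apply/trivIsetP => A B /imsetP[x _ ->] /imsetP[y _ ->] neq.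
  apply/pred0P => z /=; apply/negbTE/negP => /andP[zx zy].
  by move/eqP: neq; apply; rewrite (key _ _ zx) (key _ _ zy).
have cov : cover P = NF.
  apply/setP => z; rewrite /cover; apply/bigcupP/idP.
    case=> B /imsetP[x xNF ->]; rewrite !inE in xNF *.
    case/orP=> /eqP ->; first by [].
    by rewrite minv eq_sym.
  move=> zNF; exists [set z; m z]; last by rewrite set21.
  exact: imset_f.
have cardNF : (#|NF| + N_ext m = 4 * V)%N.
  rewrite /N_ext -[(4 * V)%N]/(4 * V)%N.
  have -> : legs m = ~: NF by apply/setP => x; rewrite !inE negbK.
  by rewrite cardsC card_prod !card_ord mulnC.
rewrite -cardNF; congr addn.
move/eqP: triv; rewrite cov => <-.
rewrite (eq_bigr (fun _ => 2%N)); last first.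
  by move=> B /imsetP[x xNF ->]; rewrite cards2; rewrite inE in xNF; rewrite eq_sym xNF.
by rewrite sum_nat_const mulnC.
Qed.

Lemma sum_ne (f : 'I_3 -> nat) :
  (\sum_(b < 3) \sum_(a < 3 | a != b) f a = 2 * \sum_(a < 3) f a)%N.
Proof.
rewrite !big_ord_recl !big_ord0.
do 3 (rewrite big_mkcond /= !big_ord_recl big_ord0 /=).
lia.
Qed.

Local Open Scope ring_scope.

Theorem proposition1 (V : nat) (kind : 'I_V -> option 'I_3)
    (m : bvert V -> bvert V) :
  involutive m ->
  connected_graph kind m ->
  (F_int kind m)%:R =
    - (omega kind m - g_bnd kind m) + 3%:R * (V_plus kind)%:R
    + 2%:R * (V_melo kind)%:R - (N_ext m)%:R
    - ((C_bnd kind m)%:R - 1) + 2%:R :> rat.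
Proof.
move=> minv _.
have HL := lines _ _ minv.
have HB := B_count _ kind.
have HV := V_split _ kind.
have HJ : (\sum_(b < 3) F_jacket kind m b = 2 * F_int kind m +
     \sum_(b < 3) \sum_(a < 3 | a != b) bub_cycles kind a b + F_bnd kind m)%N.
  rewrite /F_jacket big_split /=.
  under eq_bigr => b _ do rewrite big_split /=.
  by rewrite big_split /= sum_ne /F_int /F_bnd.
rewrite HB in HJ; move: HJ; rewrite !big_ord_recl !big_ord0 => HJ.
have HJr := congr1 (fun n : nat => n%:R : rat) HJ.
have HLr := congr1 (fun n : nat => n%:R : rat) HL.
have HVr := congr1 (fun n : nat => n%:R : rat) HV.
simpl in HJr, HLr, HVr.
rewrite !natrD ?natrM in HJr HLr HVr.
rewrite /omega !big_ord_recl !big_ord0 /g_jacket /g_bnd.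
rewrite !natrD ?natrM.
lra.
Qed.
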